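(* Let $\xi:\mathbb{R}\to\mathbb{R}^3$ be a smooth, $L$-periodic, arclength-parametrized curve with curvature $k>0$ and torsion $\tau$. Let $\alpha:\mathbb{R}\to\mathbb{R}$ satisfy $\alpha'=\tau$, and let $J=\{t:\cos\alpha(t)\neq0\}$. Let $\eta(t)=\xi(t)+r(t)\mathbf{n}(t)-r(t)\tan\alpha(t)\,\mathbf{b}(t)$ for $t\in J$ be the corresponding Monge evolute. Then: (i) $J+L=J$ and $\eta(t+L)=\eta(t)$ for all $t\in J$ if and only if $\int_0^L\tau\,dt\in\pi\mathbb{Z}$. (ii) In particular, this holds if $\xi$ is centrally symmetric. Here this means that there exist $c\in\mathbb{R}^3$ and $t_1\in\mathbb{R}$ such that either $\xi(t+t_1)=2c-\xi(t)$ for all $t$, or $\xi(t_1-t)=2c-\xi(t)$ for all $t$; in these cases $\int_0^L\tau\,dt=0$.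
   Context: $r=1/k$, and $(\mathbf{t},\mathbf{n},\mathbf{b})$ is the Frenet frame of $\xi$. A Monge evolute of $\xi$ is a curve $\eta=\xi+y\mathbf{n}+z\mathbf{b}$ with $\eta'$ parallel to $\eta-\xi$. These are exactly the curves $\xi+r\mathbf{n}-r\tan\alpha\,\mathbf{b}$ with $\alpha'=\tau$. *)

(* Defs.v *)
From Stdlib Require Import Reals.
From Coquelicot Require Import Coquelicot.
Open Scope R_scope.

Definition vec3 : Type := (R * R * R)%type.
Definition v1 (v : vec3) : R := fst (fst v).
Definition v2 (v : vec3) : R := snd (fst v).
Definition v3 (v : vec3) : R := snd v.
Definition mk3 (a b c : R) : vec3 := (a, b, c).

Definition vadd (u v : vec3) : vec3 := mk3 (v1 u + v1 v) (v2 u + v2 v) (v3 u + v3 v).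
Definition vscal (a : R) (v : vec3) : vec3 := mk3 (a * v1 v) (a * v2 v) (a * v3 v).
Definition vsub (u v : vec3) : vec3 := vadd u (vscal (-1) v).
Definition vdot (u v : vec3) : R := v1 u * v1 v + v2 u * v2 v + v3 u * v3 v.
Definition vnorm (v : vec3) : R := sqrt (vdot v v).
Definition vcross (u v : vec3) : vec3 :=
  mk3 (v2 u * v3 v - v3 u * v2 v) (v3 u * v1 v - v1 u * v3 v) (v1 u * v2 v - v2 u * v1 v).

Definition smooth_fun (f : R -> R) : Prop := forall (n : nat) (t : R), ex_derive_n f n t.
Definition smooth_curve (xi : R -> vec3) : Prop :=
  smooth_fun (fun t => v1 (xi t)) /\ smooth_fun (fun t => v2 (xi t)) /\
  smooth_fun (fun t => v3 (xi t)).
Definition dcurve (xi : R -> vec3) (t : R) : vec3 :=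
  mk3 (Derive (fun s => v1 (xi s)) t) (Derive (fun s => v2 (xi s)) t)
      (Derive (fun s => v3 (xi s)) t).

(* Frenet apparatus of an arclength-parametrized curve with k > 0. *)
Definition tangent (xi : R -> vec3) (t : R) : vec3 := dcurve xi t.
Definition curvature (xi : R -> vec3) (t : R) : R := vnorm (dcurve (dcurve xi) t).
Definition normal (xi : R -> vec3) (t : R) : vec3 :=
  vscal (/ curvature xi t) (dcurve (dcurve xi) t).
Definition binormal (xi : R -> vec3) (t : R) : vec3 :=
  vcross (tangent xi t) (normal xi t).
(* Frenet: n' = -k t + tau b *)
Definition torsion (xi : R -> vec3) (t : R) : R :=
  vdot (dcurve (normal xi) t) (binormal xi t).
Definition radius (xi : R -> vec3) (t : R) : R := / curvature xi t.

Definition Jset (alpha : R -> R) (t : R) : Prop := cos (alpha t) <> 0.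

(* Monge evolute eta = xi + r n - r tan(alpha) b  (meaningful on J) *)
Definition monge_evolute (xi : R -> vec3) (alpha : R -> R) (t : R) : vec3 :=
  vadd (vadd (xi t) (vscal (radius xi t) (normal xi t)))
       (vscal (- (radius xi t * tan (alpha t))) (binormal xi t)).

Definition evolute_periodic (xi : R -> vec3) (alpha : R -> R) (L : R) : Prop :=
  (forall s : R, (exists t, Jset alpha t /\ s = t + L) <-> Jset alpha s) /\
  (forall t : R, Jset alpha t -> monge_evolute xi alpha (t + L) = monge_evolute xi alpha t).

Definition centrally_symmetric (xi : R -> vec3) : Prop :=
  exists (c : vec3) (t1 : R),
    (forall t, xi (t + t1) = vsub (vscal 2 c) (xi t)) \/
    (forall t, xi (t1 - t) = vsub (vscal 2 c) (xi t)).

(* Main.v *)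
Require Import Defs.
From Stdlib Require Import Reals Lra.
From Coquelicot Require Import Coquelicot.
Open Scope R_scope.
Definition C1 (f : R -> R) := exists f', (forall t, is_derive f t (f' t)) /\ (forall t, continuity_pt f' t).

Lemma C1_ex f t : C1 f -> ex_derive f t.
Proof. intros [f' [H _]]. exists (f' t). apply H. Qed.
Lemma C1_cont f t : C1 f -> continuity_pt f t.
Proof. intros H. apply (proj2 (continuity_pt_filterlim f t)). apply (ex_derive_continuous f). now apply C1_ex. Qed.
Lemma C1_Dcont f t : C1 f -> continuity_pt (Derive f) t.
Proof. intros [f' [H1 H2]]. apply continuity_pt_ext with f'.
intros x; symmetry; now apply is_derive_unique. apply H2. Qed.
Lemma C1_ext f g : (forall t, f t = g t) -> C1 f -> C1 g.
Proof. intros E [f' [H1 H2]]. exists f'. split; auto. intros t. eapply is_derive_ext; eauto. Qed.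
Lemma C1_plus f g : C1 f -> C1 g -> C1 (fun t => f t + g t).
Proof. intros [f' [H1 H2]] [g' [G1 G2]]. exists (fun t => f' t + g' t). split.
intros t. apply is_derive_Reals. apply derivable_pt_lim_plus; apply is_derive_Reals; auto.
intros t; apply continuity_pt_plus; auto. Qed.
Lemma C1_minus f g : C1 f -> C1 g -> C1 (fun t => f t - g t).
Proof. intros [f' [H1 H2]] [g' [G1 G2]]. exists (fun t => f' t - g' t). split.
intros t. apply is_derive_Reals. apply derivable_pt_lim_minus; apply is_derive_Reals; auto.
intros t; apply continuity_pt_minus; auto. Qed.
Lemma C1_mult f g : C1 f -> C1 g -> C1 (fun t => f t * g t).
Proof. intros Hf Hg. pose proof Hf as [f' [H1 H2]]. pose proof Hg as [g' [G1 G2]].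
exists (fun t => f' t * g t + f t * g' t). split.
intros t. apply is_derive_Reals. apply derivable_pt_lim_mult; apply is_derive_Reals; auto.
intros t; apply continuity_pt_plus; apply continuity_pt_mult; auto using C1_cont. Qed.
Lemma C1_inv f : C1 f -> (forall t, f t <> 0) -> C1 (fun t => / f t).
Proof. intros Hf Hn. pose proof Hf as [f' [H1 H2]].
exists (fun t => - f' t / (f t * f t)). split.
intros t. replace (- f' t / (f t * f t)) with (- f' t / f t ^ 2) by (simpl; f_equal; ring).
apply is_derive_inv; [apply H1| apply Hn].
intros t. apply continuity_pt_div. apply continuity_pt_opp; auto. apply continuity_pt_mult; auto using C1_cont.
specialize (Hn t). intro E; apply Hn. nra. Qed.
Lemma C1_sqrt f : C1 f -> (forall t, 0 < f t) -> C1 (fun t => sqrt (f t)).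
Proof. intros Hf Hn. pose proof Hf as [f' [H1 H2]].
exists (fun t => f' t / (2 * sqrt (f t))). split.
intros t. apply is_derive_sqrt; auto.
intros t. apply continuity_pt_div; auto. apply continuity_pt_mult. apply continuity_pt_const; intros ??; auto.
apply (continuity_pt_comp f sqrt). apply C1_cont; auto. apply continuity_pt_sqrt. left; auto.
specialize (Hn t). assert (0 < sqrt (f t)) by (apply sqrt_lt_R0; auto). lra. Qed.
Lemma smooth_C1 f n : (forall n t, ex_derive_n f n t) -> C1 (Derive_n f n).
Proof. intros H. exists (Derive_n f (S n)). split.
intros t. apply Derive_correct. apply (H (S n) t).
intros t. apply (proj2 (continuity_pt_filterlim _ t)). apply (ex_derive_continuous (Derive_n f (S n))). apply (H (S (S n)) t). Qed.
Lemma Derive_shift f L t : Derive (fun s => f (s + L)) t = Derive f (t + L).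
Proof. unfold Derive. f_equal. apply Lim_ext. intros y.
now replace (t + y + L) with (t + L + y) by ring. Qed.
Lemma Derive_per f L t : (forall s, f (s + L) = f s) -> Derive f (t + L) = Derive f t.
Proof. intros H. rewrite <- Derive_shift. apply Derive_ext. auto. Qed.
Lemma deriv_sym (h : R -> R) (sg ep a K t : R) : sg * sg = 1 -> (forall s, ex_derive h s) ->
  (forall s, h (sg*s+a) = ep * h s + K) -> Derive h (sg*t+a) = sg * ep * Derive h t.
Proof. intros Hs Hd H.
assert (D1 : is_derive (fun s => h (sg*s+a)) t (sg * Derive h (sg*t+a))).
{ apply (is_derive_comp h (fun s => sg*s+a)). apply Derive_correct; auto.
  auto_derive; auto; ring. }
assert (D2 : is_derive (fun s => h (sg*s+a)) t (ep * Derive h t)).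
{ eapply is_derive_ext. intros; symmetry; apply H. auto_derive. apply Hd. rewrite Rmult_1_l; reflexivity. }
pose proof (is_derive_unique _ _ _ D1). pose proof (is_derive_unique _ _ _ D2).
assert (sg * Derive h (sg*t+a) = ep * Derive h t) by congruence.
transitivity (sg*sg*Derive h (sg*t+a)). rewrite Hs; ring. rewrite Rmult_assoc, H2. ring. Qed.
Lemma zero_deriv g a b : (forall x, is_derive g x 0) -> g b = g a.
Proof. intros H. assert (I1 := is_RInt_derive g (fun _ => 0) a b (fun x _ => H x)
  (fun x _ => continuous_const 0 x)).
assert (I2 := RInt_const a b 0).
apply is_RInt_unique in I1. rewrite I1 in I2.
change (minus (g b) (g a)) with (g b - g a) in I2. change (scal (b-a) 0) with ((b-a)*0) in I2.
change (zero:R) with 0 in I2. lra. Qed.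
Lemma ftc f f' a b : (forall x, is_derive f x (f' x)) -> (forall x, continuity_pt f' x) ->
  RInt f' a b = f b - f a.
Proof. intros H C. apply is_RInt_unique. apply (is_RInt_derive f f' a b (fun x _ => H x)).
intros x _. apply (continuity_pt_filterlim f' x). auto. Qed.
Definition is_proj (p : vec3 -> R) := p = v1 \/ p = v2 \/ p = v3.
Lemma proj_dcurve p c s : is_proj p -> p (dcurve c s) = Derive (fun s => p (c s)) s.
Proof. intros [ -> | [ -> | -> ] ]; reflexivity. Qed.
Lemma proj_scal p a v : is_proj p -> p (vscal a v) = a * p v.
Proof. intros [ -> | [ -> | -> ] ]; reflexivity. Qed.
Lemma curv_eq xi t : curvature xi t = sqrt (
  Derive_n (fun s => v1 (xi s)) 2 t * Derive_n (fun s => v1 (xi s)) 2 t +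
  Derive_n (fun s => v2 (xi s)) 2 t * Derive_n (fun s => v2 (xi s)) 2 t +
  Derive_n (fun s => v3 (xi s)) 2 t * Derive_n (fun s => v3 (xi s)) 2 t).
Proof. reflexivity. Qed.
Lemma smooth_proj xi p : smooth_curve xi -> is_proj p -> smooth_fun (fun s => p (xi s)).
Proof. intros [A [B C]] [ -> | [ -> | -> ] ]; auto. Qed.
Lemma curv_C1 xi : smooth_curve xi -> (forall t, 0 < curvature xi t) -> C1 (curvature xi).
Proof. intros Hs Hk. pose proof Hs as [A [B C]].
eapply C1_ext. intros t; symmetry; apply curv_eq.
set (g1 := Derive_n (fun s => v1 (xi s)) 2). set (g2 := Derive_n (fun s => v2 (xi s)) 2).
set (g3 := Derive_n (fun s => v3 (xi s)) 2).
assert (G1 : C1 g1) by (apply smooth_C1; auto).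
assert (G2 : C1 g2) by (apply smooth_C1; auto).
assert (G3 : C1 g3) by (apply smooth_C1; auto).
apply (C1_sqrt (fun t => g1 t * g1 t + g2 t * g2 t + g3 t * g3 t)).
apply (C1_plus (fun t => g1 t * g1 t + g2 t * g2 t) (fun t => g3 t * g3 t)).
apply (C1_plus (fun t => g1 t * g1 t) (fun t => g2 t * g2 t)).
apply (C1_mult g1 g1); auto. apply (C1_mult g2 g2); auto. apply (C1_mult g3 g3); auto.
intros t. specialize (Hk t). rewrite curv_eq in Hk.
fold g1 g2 g3 in Hk.
destruct (Rle_lt_dec (g1 t * g1 t + g2 t * g2 t + g3 t * g3 t) 0) as [h|h]; auto.
rewrite (sqrt_neg_0 _ h) in Hk. lra. Qed.
Lemma normal_C1 xi p : smooth_curve xi -> (forall t, 0 < curvature xi t) -> is_proj p ->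
  C1 (fun s => p (normal xi s)).
Proof. intros Hs Hk Hp.
apply (C1_ext (fun s => / curvature xi s * Derive_n (fun s => p (xi s)) 2 s)).
intros t. unfold normal. rewrite (proj_scal p _ _ Hp). rewrite (proj_dcurve p _ _ Hp).
  f_equal. simpl. apply Derive_ext. intros u. rewrite (proj_dcurve p _ _ Hp). reflexivity.
apply (C1_mult (fun s => / curvature xi s) (Derive_n (fun s => p (xi s)) 2)).
apply (C1_inv (curvature xi)). apply curv_C1; auto. intros t; specialize (Hk t); lra.
apply smooth_C1. apply smooth_proj; auto. Qed.
Lemma tangent_cont xi p t : smooth_curve xi -> is_proj p -> continuity_pt (fun s => p (tangent xi s)) t.
Proof. intros Hs Hp. apply continuity_pt_ext with (Derive_n (fun s => p (xi s)) 1).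
intros u. unfold tangent. rewrite (proj_dcurve p _ _ Hp). reflexivity.
apply C1_cont. apply smooth_C1. apply smooth_proj; auto. Qed.
Lemma torsion_cont xi t : smooth_curve xi -> (forall t, 0 < curvature xi t) -> continuity_pt (torsion xi) t.
Proof. intros Hs Hk.
assert (HN : forall p, is_proj p -> continuity_pt (fun s => p (normal xi s)) t)
  by (intros; apply C1_cont, normal_C1; auto).
assert (HdN : forall p, is_proj p -> continuity_pt (Derive (fun s => p (normal xi s))) t)
  by (intros; apply C1_Dcont, normal_C1; auto).
assert (HT : forall p, is_proj p -> continuity_pt (fun s => p (tangent xi s)) t)
  by (intros; apply tangent_cont; auto).
assert (P1 : is_proj v1) by (left; auto).
assert (P2 : is_proj v2) by (right; left; auto).
assert (P3 : is_proj v3) by (right; right; auto).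
assert (HdN' : forall p, is_proj p -> continuity_pt (fun s => p (dcurve (normal xi) s)) t).
{ intros p Hp. apply continuity_pt_ext with (Derive (fun s : R => p (normal xi s))); auto.
  intros u; rewrite (proj_dcurve p _ _ Hp); auto. }
pose (A1 := fun s => v1 (dcurve (normal xi) s)). pose (A2 := fun s => v2 (dcurve (normal xi) s)).
pose (A3 := fun s => v3 (dcurve (normal xi) s)).
pose (T1 := fun s => v1 (tangent xi s)). pose (T2 := fun s => v2 (tangent xi s)). pose (T3 := fun s => v3 (tangent xi s)).
pose (N1 := fun s => v1 (normal xi s)). pose (N2 := fun s => v2 (normal xi s)). pose (N3 := fun s => v3 (normal xi s)).
change (continuity_pt (fun t0 => A1 t0 * (T2 t0 * N3 t0 - T3 t0 * N2 t0) +
  A2 t0 * (T3 t0 * N1 t0 - T1 t0 * N3 t0) + A3 t0 * (T1 t0 * N2 t0 - T2 t0 * N1 t0)) t).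
assert (CR : forall a b c d, continuity_pt a t -> continuity_pt b t -> continuity_pt c t -> continuity_pt d t ->
  continuity_pt (fun s => a s * b s - c s * d s) t).
{ intros a b c d Ha Hb Hc Hd. apply (continuity_pt_minus (fun s => a s * b s) (fun s => c s * d s)).
  apply (continuity_pt_mult a b); auto. apply (continuity_pt_mult c d); auto. }
apply (continuity_pt_plus (fun t0 => A1 t0 * (T2 t0 * N3 t0 - T3 t0 * N2 t0) +
  A2 t0 * (T3 t0 * N1 t0 - T1 t0 * N3 t0)) (fun t0 => A3 t0 * (T1 t0 * N2 t0 - T2 t0 * N1 t0))).
apply (continuity_pt_plus (fun t0 => A1 t0 * (T2 t0 * N3 t0 - T3 t0 * N2 t0))
  (fun t0 => A2 t0 * (T3 t0 * N1 t0 - T1 t0 * N3 t0))).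
apply (continuity_pt_mult A1 (fun t0 => (T2 t0 * N3 t0 - T3 t0 * N2 t0))); [apply HdN'; auto|apply CR; first [apply HT; auto|apply HN; auto]].
apply (continuity_pt_mult A2 (fun t0 => (T3 t0 * N1 t0 - T1 t0 * N3 t0))); [apply HdN'; auto|apply CR; first [apply HT; auto|apply HN; auto]].
apply (continuity_pt_mult A3 (fun t0 => (T1 t0 * N2 t0 - T2 t0 * N1 t0))); [apply HdN'; auto|apply CR; first [apply HT; auto|apply HN; auto]].
Qed.
Lemma dcurve_per c L : (forall s, c (s+L) = c s) -> forall t, dcurve c (t+L) = dcurve c t.
Proof. intros H t. unfold dcurve.
rewrite (Derive_per (fun s => v1 (c s))), (Derive_per (fun s => v2 (c s))), (Derive_per (fun s => v3 (c s)));
 auto; intros s; rewrite H; auto. Qed.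
Lemma frenet_per xi L : (forall s, xi (s+L) = xi s) ->
  (forall t, normal xi (t+L) = normal xi t) /\ (forall t, binormal xi (t+L) = binormal xi t) /\
  (forall t, radius xi (t+L) = radius xi t) /\ (forall t, torsion xi (t+L) = torsion xi t).
Proof. intros H.
assert (H1 := dcurve_per _ _ H). assert (H2 := dcurve_per _ _ H1).
assert (Hk : forall t, curvature xi (t+L) = curvature xi t) by (intros; unfold curvature; rewrite H2; auto).
assert (HN : forall t, normal xi (t+L) = normal xi t) by (intros; unfold normal; rewrite Hk, H2; auto).
assert (HB : forall t, binormal xi (t+L) = binormal xi t) by (intros; unfold binormal, tangent; rewrite HN, H1; auto).
assert (H3 := dcurve_per _ _ HN).
split; auto. split; auto. split. intros; unfold radius; rewrite Hk; auto.
intros; unfold torsion; rewrite H3, HB; auto. Qed.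
Lemma vec_ext (u v : vec3) : (forall p, is_proj p -> p u = p v) -> u = v.
Proof. intros H. destruct u as [[x y] z], v as [[x' y'] z'].
assert (A := H v1 (or_introl eq_refl)). assert (B := H v2 (or_intror (or_introl eq_refl))).
assert (C := H v3 (or_intror (or_intror eq_refl))). unfold v1, v2, v3 in *; cbn in A, B, C. subst. auto. Qed.
Lemma sym_torsion xi sg a c : smooth_curve xi -> (forall t, 0 < curvature xi t) -> (sg = 1 \/ sg = -1) ->
  (forall t, xi (sg*t+a) = vsub (vscal 2 c) (xi t)) -> forall t, torsion xi (sg*t+a) = - torsion xi t.
Proof. intros Hs Hk Hsg0 H.
assert (Hsg : sg * sg = 1) by (destruct Hsg0; subst; ring).
assert (HD1 : forall p, is_proj p -> forall t, p (dcurve xi (sg*t+a)) = -sg * p (dcurve xi t)).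
{ intros p Hp t. rewrite !(proj_dcurve p _ _ Hp).
  rewrite (deriv_sym (fun s => p (xi s)) sg (-1) a (2 * p c)); auto. ring.
  intros s. exact (smooth_proj xi p Hs Hp 1%nat s).
  intros s. rewrite H. destruct Hp as [ -> | [ -> | -> ] ]; unfold vsub, vadd, vscal; cbn; ring. }
assert (HD1' : forall t, dcurve xi (sg*t+a) = vscal (-sg) (dcurve xi t)).
{ intros t; apply vec_ext; intros p Hp; rewrite (proj_scal p _ _ Hp); auto. }
assert (HD2 : forall p, is_proj p -> forall t, p (dcurve (dcurve xi) (sg*t+a)) = -1 * p (dcurve (dcurve xi) t)).
{ intros p Hp t. rewrite !(proj_dcurve p _ _ Hp).
  rewrite (deriv_sym (fun s => p (dcurve xi s)) sg (-sg) a 0); auto.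
  replace (sg * - sg) with (-(sg*sg)) by ring. rewrite Hsg. ring.
  intros s. eapply ex_derive_ext; [|exact (smooth_proj xi p Hs Hp 2%nat s)].
  intros u; simpl; rewrite (proj_dcurve p _ _ Hp); reflexivity.
  intros s. rewrite HD1; auto. ring. }
assert (HD2' : forall t, dcurve (dcurve xi) (sg*t+a) = vscal (-1) (dcurve (dcurve xi) t)).
{ intros t; apply vec_ext; intros p Hp; rewrite (proj_scal p _ _ Hp); auto. }
assert (HK : forall t, curvature xi (sg*t+a) = curvature xi t).
{ intros t; unfold curvature, vnorm, vdot; rewrite HD2'; unfold vscal; cbn; f_equal; ring. }
assert (HN : forall t, normal xi (sg*t+a) = vscal (-1) (normal xi t)).
{ intros t; unfold normal; rewrite HK, HD2'; unfold vscal, mk3; cbn; f_equal; [f_equal|]; ring. }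
assert (HdN : forall p, is_proj p -> forall t, p (dcurve (normal xi) (sg*t+a)) = -sg * p (dcurve (normal xi) t)).
{ intros p Hp t. rewrite !(proj_dcurve p _ _ Hp).
  rewrite (deriv_sym (fun s => p (normal xi s)) sg (-1) a 0); auto. ring.
  intros s. apply C1_ex, normal_C1; auto.
  intros s. rewrite HN, (proj_scal p _ _ Hp). ring. }
assert (HdN' : forall t, dcurve (normal xi) (sg*t+a) = vscal (-sg) (dcurve (normal xi) t)).
{ intros t; apply vec_ext; intros p Hp; rewrite (proj_scal p _ _ Hp); auto. }
assert (HB : forall t, binormal xi (sg*t+a) = vscal sg (binormal xi t)).
{ intros t; unfold binormal, tangent; rewrite HN, HD1'; unfold vscal, vcross, mk3; cbn; f_equal; [f_equal|]; ring. }
intros t. unfold torsion. rewrite HdN', HB. unfold vdot, vscal; cbn.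
destruct Hsg0; subst; ring. Qed.
Lemma sq_deriv (h : R -> R) t : ex_derive h t -> is_derive (fun s => h s * h s) t (2 * h t * Derive h t).
Proof. intros H. apply is_derive_Reals. replace (2 * h t * Derive h t) with (Derive h t * h t + h t * Derive h t) by ring.
apply (derivable_pt_lim_mult h h); apply is_derive_Reals, Derive_correct; auto. Qed.
Lemma binormal_unit xi t : smooth_curve xi -> (forall t, vnorm (tangent xi t) = 1) ->
  (forall t, 0 < curvature xi t) -> vdot (binormal xi t) (binormal xi t) = 1.
Proof. intros Hs HT Hk.
assert (P1 : is_proj v1) by (left; auto).
assert (P2 : is_proj v2) by (right; left; auto).
assert (P3 : is_proj v3) by (right; right; auto).
assert (TT : forall t, vdot (dcurve xi t) (dcurve xi t) = 1).
{ intros u. specialize (HT u). unfold vnorm, tangent in HT.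
  assert (0 <= vdot (dcurve xi u) (dcurve xi u)) by (unfold vdot; nra).
  rewrite <- (sqrt_sqrt _ H), HT. ring. }
assert (EX : forall p, is_proj p -> forall u, ex_derive (fun s => p (dcurve xi s)) u).
{ intros p Hp u. eapply ex_derive_ext; [|exact (smooth_proj xi p Hs Hp 2%nat u)].
  intros w; simpl; rewrite (proj_dcurve p _ _ Hp); reflexivity. }
assert (TD : vdot (dcurve xi t) (dcurve (dcurve xi) t) = 0).
{ pose (h1 := fun s => v1 (dcurve xi s)). pose (h2 := fun s => v2 (dcurve xi s)).
  pose (h3 := fun s => v3 (dcurve xi s)).
  assert (D : is_derive (fun s => h1 s * h1 s + h2 s * h2 s + h3 s * h3 s) t
    (2 * h1 t * Derive h1 t + 2 * h2 t * Derive h2 t + 2 * h3 t * Derive h3 t)).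
  { apply is_derive_Reals.
    apply (derivable_pt_lim_plus (fun s => h1 s * h1 s + h2 s * h2 s) (fun s => h3 s * h3 s)).
    apply (derivable_pt_lim_plus (fun s => h1 s * h1 s) (fun s => h2 s * h2 s)).
    all: apply is_derive_Reals, sq_deriv; apply EX; auto. }
  assert (D0 : is_derive (fun s => h1 s * h1 s + h2 s * h2 s + h3 s * h3 s) t 0).
  { eapply is_derive_ext; [|apply (is_derive_const 1 t)]. intros u. symmetry. apply (TT u). }
  apply is_derive_unique in D. apply is_derive_unique in D0. rewrite D0 in D.
  unfold vdot. rewrite !(proj_dcurve _ (dcurve xi) t) by auto. 
  unfold h1, h2, h3 in D. lra. }
assert (KK : curvature xi t * curvature xi t = vdot (dcurve (dcurve xi) t) (dcurve (dcurve xi) t)).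
{ unfold curvature, vnorm. apply sqrt_sqrt. unfold vdot; nra. }
specialize (Hk t). specialize (TT t).
unfold binormal, tangent, normal.
set (k := curvature xi t) in *. set (a := dcurve xi t) in *. set (b := dcurve (dcurve xi) t) in *.
transitivity ((vdot a a * vdot b b - vdot a b * vdot a b) * (/k * /k)).
unfold vdot, vcross, vscal; cbn; ring.
rewrite TT, TD, <- KK. field. lra. Qed.
Lemma lin_deriv (al : R -> R) sg a x l : is_derive al (sg*x+a) l -> is_derive (fun s => al (sg*s+a)) x (sg * l).
Proof. intros H. apply (is_derive_comp al (fun s => sg*s+a)); auto. auto_derive; auto; ring. Qed.

Lemma shift_der (al : R -> R) L x l : is_derive al (x+L) l -> is_derive (fun s => al (s+L)) x l.
Proof. intros H. replace l with (1*l) by ring. eapply is_derive_ext; [|apply (lin_deriv al 1 L x)].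
intros; simpl; f_equal; ring. replace (1*x+L) with (x+L) by ring. auto. Qed.

Theorem mainTheorem16 (xi : R -> vec3) (L : R) (alpha : R -> R) :
  0 < L ->
  smooth_curve xi ->
  (forall t, xi (t + L) = xi t) ->
  (forall t, vnorm (tangent xi t) = 1) ->
  (forall t, 0 < curvature xi t) ->
  (forall t, is_derive alpha t (torsion xi t)) ->
  (evolute_periodic xi alpha L <->
     exists m : Z, RInt (torsion xi) 0 L = IZR m * PI) /\
  (centrally_symmetric xi ->
     RInt (torsion xi) 0 L = 0 /\ evolute_periodic xi alpha L).
Proof. intros HL Hs Hper HT Hk Ha.
destruct (frenet_per xi L Hper) as [PN [PB [PR PTau]]].
set (d := alpha L - alpha 0).
assert (Aper : forall t, alpha (t+L) = alpha t + d).
{ intros t.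
  assert (ZD : forall x, is_derive (fun s => alpha (s+L) - alpha s) x 0).
  { intros x. apply is_derive_Reals.
  replace 0 with (torsion xi (x+L) - torsion xi x) by (rewrite PTau; ring).
  apply (derivable_pt_lim_minus (fun s => alpha (s+L)) alpha); apply is_derive_Reals; auto.
  apply shift_der. apply Ha. }
  assert (Z := zero_deriv _ 0 t ZD). cbv beta in Z. rewrite Rplus_0_l in Z. unfold d. lra. }
assert (RI : RInt (torsion xi) 0 L = d).
{ unfold d. apply ftc; auto. intros x; apply torsion_cont; auto. }
assert (Part1 : evolute_periodic xi alpha L <-> exists m : Z, RInt (torsion xi) 0 L = IZR m * PI).
{ rewrite RI. split.
  - intros [HJ Heta].
    destruct (Classical_Prop.classic (exists t0, Jset alpha t0)) as [[t0 Ht0]|Hno].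
    + assert (Ht0L : Jset alpha (t0+L)) by (apply HJ; exists t0; auto).
      assert (E := Heta t0 Ht0). unfold monge_evolute in E. rewrite Hper, PR, PN, PB in E.
      set (r := radius xi t0) in E. set (A := alpha (t0+L)) in E. set (A0 := alpha t0) in E.
      set (B := binormal xi t0) in E.
      assert (BB := binormal_unit xi t0 Hs HT Hk). fold B in BB. unfold vdot in BB.
      assert (Hr : 0 < r) by (unfold r, radius; apply Rinv_0_lt_compat; auto).
      clearbody B r.
      assert (E1 := f_equal v1 E). assert (E2 := f_equal v2 E). assert (E3 := f_equal v3 E).
      unfold vadd, vscal in E1, E2, E3. cbn in E1, E2, E3.
      assert (U : r * tan A - r * tan A0 = 0).
      { transitivity ((r * tan A - r * tan A0) * (v1 B * v1 B + v2 B * v2 B + v3 B * v3 B)).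
        rewrite BB; ring.
        assert (F1 : (r*tan A - r*tan A0) * v1 B = 0) by lra.
        assert (F2 : (r*tan A - r*tan A0) * v2 B = 0) by lra.
        assert (F3 : (r*tan A - r*tan A0) * v3 B = 0) by lra.
        transitivity (v1 B * ((r*tan A - r*tan A0) * v1 B) + v2 B * ((r*tan A - r*tan A0) * v2 B)
          + v3 B * ((r*tan A - r*tan A0) * v3 B)). ring. rewrite F1, F2, F3; ring. }
      assert (TA : tan A = tan A0).
      { apply (Rmult_eq_reg_l r); auto; lra. }
      unfold Jset in Ht0, Ht0L. fold A in Ht0L. fold A0 in Ht0.
      unfold tan in TA.
      assert (SD : sin d = 0).
      { replace d with (A - A0) by (unfold A, A0; rewrite Aper; ring).
        rewrite sin_minus. field_simplify_eq in TA; auto. lra. }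
      destruct (sin_eq_0_0 d SD) as [m Hm]. exists m. auto.
    + assert (C0 : forall t, cos (alpha t) = 0).
      { intros t. apply Classical_Prop.NNPP. intros C. apply Hno. exists t. exact C. }
      assert (T0 : forall t, torsion xi t = 0).
      { intros t.
        assert (D1 : is_derive (fun s => cos (alpha s)) t (scal (torsion xi t) (- sin (alpha t)))).
        { apply (is_derive_comp cos alpha); auto. apply is_derive_Reals, derivable_pt_lim_cos. }
        assert (D0 : is_derive (fun s => cos (alpha s)) t 0).
        { eapply is_derive_ext; [|apply (is_derive_const 0 t)]. intros u; simpl; rewrite C0; auto. }
        apply is_derive_unique in D1. apply is_derive_unique in D0. rewrite D0 in D1.
        change (scal (torsion xi t) (- sin (alpha t))) with (torsion xi t * - sin (alpha t)) in D1.
        assert (S2 := sin2_cos2 (alpha t)). rewrite C0 in S2. unfold Rsqr in S2.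
        nra. }
      exists 0%Z. unfold d. rewrite (zero_deriv alpha 0 L). simpl; ring.
      intros x. rewrite <- (T0 x). auto.
  - intros [m Hm].
    set (e := cos (IZR m * PI)).
    assert (S0 : sin (IZR m * PI) = 0) by (apply sin_eq_0_1; exists m; auto).
    assert (EE : e * e = 1) by (assert (S2 := sin2_cos2 (IZR m * PI)); rewrite S0 in S2; unfold Rsqr in S2; unfold e; lra).
    assert (CP : forall x, cos (x + d) = e * cos x) by (intros; rewrite Hm, cos_plus, S0; unfold e; ring).
    assert (SP : forall x, sin (x + d) = e * sin x) by (intros; rewrite Hm, sin_plus, S0; unfold e; ring).
    assert (En : e <> 0) by (intro Z; rewrite Z in EE; lra).
    split.
    + intros s. unfold Jset. split.
      * intros [t [Ht ->]]. rewrite Aper, CP. intro Z. apply Rmult_integral in Z. tauto.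
      * intros Hs'. exists (s - L). split.
        intro Z. apply Hs'. replace s with (s - L + L) by ring. rewrite Aper, CP, Z. ring.
        ring.
    + intros t Ht. unfold Jset in Ht. unfold monge_evolute. rewrite Hper, PR, PN, PB.
      replace (tan (alpha (t+L))) with (tan (alpha t)). reflexivity.
      unfold tan. rewrite Aper, CP, SP. field. auto. }
split; auto.
intros [c [t1 Hsym]].
assert (D0 : d = 0).
{ assert (G : exists sg, (sg = 1 \/ sg = -1) /\ forall t, xi (sg*t+t1) = vsub (vscal 2 c) (xi t)).
  { destruct Hsym as [H1|H2]. exists 1. split; auto. intros t. rewrite <- H1. f_equal; ring.
    exists (-1). split; auto. intros t. rewrite <- H2. f_equal; ring. }
  destruct G as [sg [Hsg HS]].
  assert (ST := sym_torsion xi sg t1 c Hs Hk Hsg HS).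
  assert (Z := zero_deriv (fun s => alpha (sg*s+t1) + sg * alpha s) 0 L). simpl in Z.
  rewrite Rmult_0_r, Rplus_0_l in Z.
  assert (Hsg2 : sg * sg = 1) by (destruct Hsg; subst; ring).
  assert (Z' : alpha (sg * L + t1) + sg * alpha L = alpha t1 + sg * alpha 0).
  { apply Z. intros x. apply is_derive_Reals.
    replace 0 with (sg * torsion xi (sg*x+t1) + sg * torsion xi x) by (rewrite ST; ring).
    apply (derivable_pt_lim_plus (fun s => alpha (sg*s+t1)) (fun s => sg * alpha s)).
    apply is_derive_Reals. apply lin_deriv. auto.
    apply derivable_pt_lim_scal. apply is_derive_Reals. auto. }
  destruct Hsg as [-> | ->].
  - replace (1*L+t1) with (t1+L) in Z' by ring. rewrite Aper in Z'. unfold d in *. lra.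
  - assert (W := Aper (t1 - L)). replace (t1 - L + L) with t1 in W by ring.
    replace (-1*L+t1) with (t1-L) in Z' by ring. unfold d in *. lra. }
split. rewrite RI; auto.
apply Part1. exists 0%Z. rewrite RI, D0. simpl; ring.
Qed.
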